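(* Let $\mathcal L$ be a finite distributive lattice, $p\in\mathcal L$ and $S\subseteq N(p)$ with $|S|=i$. Let $r=\bigwedge\{q: q\in S\}$ and let $T$ be the set of all upper neighbors of $r$ in the interval $[r,p]$. Then (1) $|T|=i$ and $\bigvee T=p$; (2) $\mathrm{lcm}(u_p,\{u_q\}_{q\in S})=\mathrm{lcm}(u_r,\{u_s\}_{s\in T})$; (3) for any $r'\neq r$ and any $T'\subseteq M(r')$, one has $\mathrm{lcm}(u_{r'},\{u_{s'}\}_{s'\in T'})\neq\mathrm{lcm}(u_p,\{u_q\}_{q\in S})$.
   Context: Let $P$ be the set of join-irreducible elements of $\mathcal L$ (elements with exactly one lower neighbor); for $p\in\mathcal L$ put $\ell(p)=\{q\in P:q\le p\}$. Let $K$ be a field, $S=K[x_p,y_p:p\in P]$ and for $q\in\mathcal L$, $u_q=\prod_{p\in\ell(q)}x_p\prod_{p\in P\setminus\ell(q)}y_p$. $N(p)$ is the set of lower neighbors of $p$ (elements covered by $p$), $M(r)$ the set of upper neighbors of $r$ (elements covering $r$); $[r,p]=\{t:r\le t\le p\}$. *)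

(* Defs.v *)
From HB Require Import structures.
From mathcomp Require Import all_boot all_order.
Set Implicit Arguments. Unset Strict Implicit. Unset Printing Implicit Defensive.
Import Order.TTheory.
Local Open Scope order_scope.

Section LatticeDefs.
Variables (d : Order.disp_t) (L : finTBDistrLatticeType d).

Definition covers (x y : L) : bool :=
  (x < y) && [forall z : L, ~~ ((x < z) && (z < y))].

Definition lower_nbrs (p : L) : {set L} := [set q | covers q p].
Definition upper_nbrs (r : L) : {set L} := [set s | covers r s].

Definition join_irr (q : L) : bool := #|lower_nbrs q| == 1%N.

(* the variables x_p (true, p) and y_p (false, p) of S = K[x_p, y_p : p in P] *)
Definition var := (bool * {q : L | join_irr q})%type.

(* monomials of S, represented by their exponent vectors *)
Definition monomial := {ffun var -> nat}.

(* u_q = prod_{p in l(q)} x_p * prod_{p in P \ l(q)} y_p *)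
Definition u (q : L) : monomial :=
  [ffun v : var => nat_of_bool (if v.1 then val v.2 <= q else ~~ (val v.2 <= q))].

Definition lcm_fam (a : L) (B : {set L}) : monomial :=
  [ffun v : var => maxn (u a v) (\max_(b in B) u b v)].

End LatticeDefs.

(* Main.v *)
Require Import Defs.
From HB Require Import structures.
From mathcomp Require Import all_boot all_order.
Set Implicit Arguments. Unset Strict Implicit. Unset Printing Implicit Defensive.
Import Order.TTheory.
Local Open Scope order_scope.

Section Aux.
Variables (d : Order.disp_t) (L : finTBDistrLatticeType d).
Implicit Types (a b c j p q r s w x y z : L).

Lemma ex_min (P : pred L) x : P x ->
  exists z, P z /\ forall w, w < z -> ~~ P w.
Proof.
suff H : forall n x, (#|[set w : L | (w < x)%O]| <= n)%N -> P x ->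
  exists z, P z /\ forall w, w < z -> ~~ P w by move=> Px; exact: (H _ x (leqnn _) Px).
elim=> [|n IH] {}x Hn Px.
  exists x; split=> // w wx; move: Hn; rewrite leqn0 => /eqP/cards0_eq/setP/(_ w).
  by rewrite inE wx in_set0.
case: (boolP [exists w, (w < x) && P w]) => [/existsP [w /andP [wx Pw]]|].
  apply: (IH w) => //; rewrite -ltnS; apply: leq_trans Hn; apply: proper_card.
  apply/properP; split.
    by apply/subsetP=> v; rewrite !inE => vw; apply: lt_trans vw wx.
  by exists w; rewrite !inE ?ltxx.
move=> /existsPn H; exists x; split=> // w wx; move: (H w); by rewrite wx.
Qed.

Lemma ex_max (P : pred L) x : P x ->
  exists z, P z /\ forall w, z < w -> ~~ P w.
Proof.
suff H : forall n x, (#|[set w : L | (x < w)%O]| <= n)%N -> P x ->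
  exists z, P z /\ forall w, z < w -> ~~ P w by move=> Px; exact: (H _ x (leqnn _) Px).
elim=> [|n IH] {}x Hn Px.
  exists x; split=> // w wx; move: Hn; rewrite leqn0 => /eqP/cards0_eq/setP/(_ w).
  by rewrite inE wx in_set0.
case: (boolP [exists w, (x < w) && P w]) => [/existsP [w /andP [wx Pw]]|].
  apply: (IH w) => //; rewrite -ltnS; apply: leq_trans Hn; apply: proper_card.
  apply/properP; split.
    by apply/subsetP=> v; rewrite !inE => vw; apply: lt_trans wx vw.
  by exists w; rewrite !inE ?ltxx.
move=> /existsPn H; exists x; split=> // w wx; move: (H w); by rewrite wx.
Qed.

Lemma covers_lt a b : covers a b -> a < b.
Proof. by case/andP. Qed.

Lemma covers_mid a b w : covers a b -> a <= w -> w <= b -> (w == a) || (w == b).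
Proof.
case/andP=> _ /forallP /(_ w) H aw wb; move: H.
rewrite !lt_neqAle aw wb !andbT negb_and !negbK.
by case/orP=> /eqP->; rewrite eqxx ?orbT.
Qed.

Lemma cover_below a z : a < z -> exists c, a <= c /\ covers c z.
Proof.
move=> az; have HP : (fun c => (a <= c) && (c < z)) a by rewrite /= lexx az.
have [c [/andP [ac cz] Hc]] := @ex_max (fun c => (a <= c) && (c < z)) a HP.
exists c; split=> //; rewrite /covers cz; apply/forallP=> w.
apply/negP=> /andP [cw wz]; move: (Hc w cw).
by rewrite wz (le_trans ac (ltW cw)).
Qed.

Lemma covers_join a b z : covers a z -> covers b z -> a != b -> a `|` b = z.
Proof.
move=> ca cb ab.
have Hz : a `|` b <= z by rewrite leUx !ltW ?(covers_lt ca) ?(covers_lt cb).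
have := covers_mid ca (leUl a b) Hz.
case/orP=> /eqP // H.
have ba : b <= a by rewrite -H leUr.
have := covers_mid cb ba (ltW (covers_lt ca)).
by rewrite (negbTE ab) /= => /eqP az; move: (covers_lt ca); rewrite az ltxx.
Qed.

Lemma ji_not_bot j : join_irr j -> j != \bot.
Proof.
rewrite /join_irr; apply: contraL => /eqP->.
suff -> : lower_nbrs (\bot : L) = set0 by rewrite cards0.
by apply/setP=> q; rewrite !inE /covers ltx0.
Qed.

Lemma ji_below j c w : join_irr j -> covers c j -> w < j -> w <= c.
Proof.
move=> /cards1P [x Hx] cj wj.
have [c' [wc' c'j]] := cover_below wj.
have : c \in lower_nbrs j by rewrite inE.
have : c' \in lower_nbrs j by rewrite inE.
by rewrite Hx !inE => /eqP e1 /eqP e2; rewrite e2 -e1.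
Qed.

Lemma join_prime j a b : join_irr j -> j <= a `|` b -> (j <= a) || (j <= b).
Proof.
move=> Jj jab; apply/negPn/negP; rewrite negb_or => /andP [ja jb].
have : \bot < j by rewrite lt_neqAle eq_sym ji_not_bot // le0x.
case/cover_below=> c [_ cj].
have Ha : j `&` a <= c.
  apply: (ji_below Jj cj); rewrite lt_neqAle leIl andbT.
  by apply: contra ja => /eqP <-; rewrite leIr.
have Hb : j `&` b <= c.
  apply: (ji_below Jj cj); rewrite lt_neqAle leIl andbT.
  by apply: contra jb => /eqP <-; rewrite leIr.
have : j <= c.
  have -> : j = j `&` (a `|` b) by apply/esym/meet_idPl.
  by rewrite meetUr leUx Ha Hb.
by move=> jc; move: (lt_le_trans (covers_lt cj) jc); rewrite ltxx.
Qed.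

Lemma join_prime_big j (T : {set L}) : join_irr j -> j <= \join_(s in T) s ->
  exists2 s, s \in T & j <= s.
Proof.
move=> Jj H.
suff : [exists s in T, j <= s] by case/existsP=> s /andP [sT js]; exists s.
move: H; apply/implyP.
apply: (big_ind (fun y => (j <= y) ==> [exists s in T, j <= s])).
- by rewrite lex0 (negbTE (ji_not_bot Jj)).
- move=> x y /implyP Hx /implyP Hy; apply/implyP => /(join_prime Jj) /orP [];
  by [apply: Hx | apply: Hy].
- by move=> s sT; apply/implyP=> js; apply/existsP; exists s; rewrite sT.
Qed.

Lemma sep_ji x y : ~~ (x <= y) -> exists j, [/\ join_irr j, j <= x & ~~ (j <= y)].
Proof.
move=> xy.
have HP : (fun z => (z <= x) && ~~ (z <= y)) x by rewrite /= lexx xy.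
have [z [/andP [zx zy] Hz]] := @ex_min (fun z => (z <= x) && ~~ (z <= y)) x HP.
exists z; split=> //.
have zb : \bot < z by rewrite lt_neqAle le0x andbT; apply: contra zy => /eqP <-; apply: le0x.
have [c [_ cz]] := cover_below zb.
apply/cards1P; exists c; apply/setP=> w; rewrite !inE.
apply/idP/idP => [wz|/eqP -> //].
apply/negPn/negP=> wc.
have Hw : w <= y.
  have := Hz w (covers_lt wz); rewrite (le_trans (ltW (covers_lt wz)) zx) /=.
  by rewrite negbK.
have Hc : c <= y.
  have := Hz c (covers_lt cz); rewrite (le_trans (ltW (covers_lt cz)) zx) /=.
  by rewrite negbK.
by move: zy; rewrite -(covers_join wz cz wc) leUx Hw Hc.
Qed.

Lemma ji_eq x y : (forall j, join_irr j -> (j <= x) = (j <= y)) -> x = y.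
Proof.
move=> H; apply/le_anti/andP; split; apply/negPn/negP.
  by case/sep_ji=> j [Jj jx jy]; move: jy; rewrite -H // jx.
by case/sep_ji=> j [Jj jx jy]; move: jy; rewrite H // jx.
Qed.

Lemma coverK a b c : covers a b -> c <= b -> ~~ (c <= a) -> covers (a `&` c) c.
Proof.
move=> ab cb ca; rewrite /covers lt_neqAle leIr andbT.
apply/andP; split.
  by apply: contra ca => /eqP <-; rewrite leIl.
apply/forallP=> z; apply/negP=> /andP [az zc].
have za : ~~ (z <= a).
  apply: contraL az => za; apply/negP => H.
  have H2 : z <= a `&` c by rewrite lexI za (ltW zc).
  by move: (lt_le_trans H H2); rewrite ltxx.
have Hzb : z `|` a <= b by rewrite leUx (ltW (covers_lt ab)) andbT (le_trans (ltW zc) cb).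
have := covers_mid ab (leUr a z) Hzb.
case/orP=> /eqP H.
  have : z <= a by rewrite -H leUl.
  by rewrite (negbTE za).
have : c = z.
  have -> : c = c `&` b by apply/esym/meet_idPl.
  rewrite -H meetUr (meet_idPr (ltW zc)) meetC.
  by apply/join_idPl; apply: ltW.
by move=> E; move: zc; rewrite E ltxx.
Qed.

Lemma join_bigmeet x (A : {set L}) (F : L -> L) :
  x `|` \meet_(i in A) F i = \meet_(i in A) (x `|` F i).
Proof.
apply: (big_morph (fun y => x `|` y)).
  by move=> a b; rewrite joinIr.
by rewrite joinx1.
Qed.

Lemma max_bool (B : {set L}) (f : L -> bool) :
  \max_(b in B) nat_of_bool (f b) = nat_of_bool [exists b in B, f b].
Proof.
case: (boolP [exists b in B, f b]) => [/existsP [b /andP [bB fb]]|/existsPn H].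
  apply/anti_leq/andP; split.
    by apply/bigmax_leqP => c _; case: (f c).
  by apply: leq_trans (leq_bigmax_cond _ bB); rewrite fb.
apply/eqP; rewrite -leqn0; apply/bigmax_leqP => c cB.
by move: (H c); rewrite cB /=; case: (f c).
Qed.

Lemma lcm_true a (B : {set L}) (j : {q : L | join_irr q}) :
  lcm_fam a B (true, j) = nat_of_bool ((val j <= a) || [exists b in B, val j <= b]).
Proof.
rewrite /lcm_fam ffunE /u ffunE /=.
rewrite (eq_bigr (fun b => nat_of_bool (val j <= b))); last by move=> b _; rewrite ffunE.
by rewrite max_bool; case: (_ <= _); case: [exists _ in _, _].
Qed.

Lemma lcm_false a (B : {set L}) (j : {q : L | join_irr q}) :
  lcm_fam a B (false, j) = nat_of_bool (~~ (val j <= a) || [exists b in B, ~~ (val j <= b)]).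
Proof.
rewrite /lcm_fam ffunE /u ffunE /=.
rewrite (eq_bigr (fun b => nat_of_bool (~~ (val j <= b)))); last by move=> b _; rewrite ffunE.
by rewrite max_bool; case: (_ <= _); case: [exists _ in _, _].
Qed.

Lemma lcm_false_low a (B : {set L}) (j : {q : L | join_irr q}) :
  (forall b, b \in B -> a <= b) ->
  lcm_fam a B (false, j) = nat_of_bool (~~ (val j <= a)).
Proof.
move=> H; rewrite lcm_false; congr nat_of_bool.
apply/idP/idP => [/orP [//|/exists_inP [b bB jb]]|->//].
by apply: contra jb => ja; apply: le_trans ja (H _ bB).
Qed.

Lemma nat_of_bool_inj : injective nat_of_bool.
Proof. by case; case. Qed.

End Aux.

Theorem lemma3p5 (d : Order.disp_t) (L : finTBDistrLatticeType d)
    (p : L) (S : {set L}) (i : nat) :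
  S \subset lower_nbrs p -> #|S| = i -> (0 < i)%N ->
  let r := \meet_(q in S) q in
  let T := [set s in upper_nbrs r | (r <= s) && (s <= p)] in
  [/\ #|T| = i /\ \join_(s in T) s = p,
      lcm_fam p S = lcm_fam r T &
      forall (r' : L) (T' : {set L}), r' != r -> T' \subset upper_nbrs r' ->
        lcm_fam r' T' != lcm_fam p S].
Proof.
move=> HS Hc Hi r T.
have F0 : forall q, q \in S -> covers q p.
  by move=> q qS; move/subsetP: HS => /(_ q qS); rewrite inE.
have Fr : forall q, q \in S -> r <= q by move=> q qS; apply: meets_inf.
have [q0 q0S] : exists q0, q0 \in S.
  by apply/set0Pn; rewrite -card_gt0 Hc.
have Frp : r <= p by apply: le_trans (Fr _ q0S) (ltW (covers_lt (F0 _ q0S))).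
have Frj : forall j : L, (j <= r) = [forall q in S, j <= q].
  move=> j; apply/idP/idP.
    by move=> jr; apply/forallP=> q; apply/implyP=> qS; apply: le_trans jr (Fr _ qS).
  by move/forall_inP=> H; apply/meetsP.
pose M q := \meet_(x in S :\ q) x.
pose m q := p `&` M q.
have Fm_le : forall q q', q' \in S -> q' != q -> m q <= q'.
  by move=> q q' q'S nq; apply: leIxr; apply: meets_inf; rewrite !inE nq.
have Fmq : forall q, q \in S -> q `&` m q = r.
  move=> q qS; have Er : r = q `&` M q by rewrite /r (big_setD1 _ qS).
  rewrite Er /m meetCA; apply/meet_idPr.
  exact: le_trans (leIl _ _) (ltW (covers_lt (F0 _ qS))).
have Fnle : forall q, q \in S -> ~~ (m q <= q).
  move=> q qS; apply/negP=> mq.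
  have H1 : p <= q `|` M q.
    rewrite /M join_bigmeet; apply/meetsP=> x; rewrite !inE => /andP [xq xS].
    by rewrite (covers_join (F0 _ qS) (F0 _ xS)) // eq_sym.
  have H2 : p <= q `|` m q.
    by rewrite /m joinIr lexI leUr H1.
  move: H2; rewrite (join_idPl mq) => pq.
  by move: (lt_le_trans (covers_lt (F0 _ qS)) pq); rewrite ltxx.
have Fmp : forall q, m q <= p by move=> q; apply: leIl.
have Fcov : forall q, q \in S -> covers r (m q).
  by move=> q qS; rewrite -(Fmq _ qS); apply: coverK (F0 _ qS) (Fmp q) (Fnle _ qS).
have Fiii : forall s q q', covers r s -> s <= p -> q \in S -> q' \in S -> q != q' ->
    ~~ (s <= q) -> s <= q'.
  move=> s q q' rs sp qS q'S qq' sq; apply/negPn/negP => sq'.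
  have E1 : s `&` q' = r.
    have H1 : r <= s `&` q' by rewrite lexI (ltW (covers_lt rs)) (Fr _ q'S).
    case/orP: (covers_mid rs H1 (leIl _ _)) => /eqP // E.
    by move: sq'; rewrite -E leIr.
  have E2 : s `|` q = p.
    have H1 : s `|` q <= p by rewrite leUx sp (ltW (covers_lt (F0 _ qS))).
    case/orP: (covers_mid (F0 _ qS) (leUr _ _) H1) => /eqP // E.
    by move: sq; rewrite -E leUl.
  have q'q : q' <= q.
    rewrite -(meet_idPl (ltW (covers_lt (F0 _ q'S)))) -E2 meetUr leUx (meetC q' s) E1.
    by rewrite (Fr _ qS) leIr.
  case/orP: (covers_mid (F0 _ q'S) q'q (ltW (covers_lt (F0 _ qS)))) => /eqP E.
    by move: qq'; rewrite E eqxx.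
  by move: (covers_lt (F0 _ qS)); rewrite E ltxx.
have FT : T = m @: S.
  apply/setP=> s; apply/idP/idP.
    rewrite !inE => /andP [rs /andP [_ sp]].
    have [q qS sq] : exists2 q, q \in S & ~~ (s <= q).
      case: (boolP [exists q in S, ~~ (s <= q)]) => [/exists_inP //|/exists_inPn H].
      have : s <= r by rewrite Frj; apply/forall_inP => q qS; move: (H q qS); rewrite negbK.
      by move=> sr; move: (lt_le_trans (covers_lt rs) sr); rewrite ltxx.
    apply/imsetP; exists q => //.
    have sm : s <= m q.
      rewrite lexI sp; apply/meetsP => x; rewrite !inE => /andP [xq xS].
      by apply: (Fiii s q x) => //; rewrite eq_sym.
    have := covers_mid (Fcov _ qS) (ltW (covers_lt rs)) sm.
    case/orP=> /eqP // sr.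
    by move: (covers_lt rs); rewrite sr ltxx.
  case/imsetP=> q qS ->; rewrite !inE Fcov // Fmp andbT.
  exact: ltW (covers_lt (Fcov _ qS)).
have Finj : {in S &, injective m}.
  move=> q q' qS q'S E; apply/eqP; apply/negPn/negP => nq.
  by move: (Fnle _ qS); rewrite E (Fm_le q' q qS nq).
have HcT : #|T| = i by rewrite FT card_in_imset.
have HJ : \join_(s in T) s = p.
  apply/le_anti/andP; split.
    by apply/joinsP => s; rewrite !inE => /andP [_ /andP [_ ->]].
  set J := \join_(s in T) s.
  have mJ : forall q, q \in S -> m q <= J.
    by move=> q qS; apply: (joins_sup (fun x => x)); rewrite FT; apply: imset_f.
  have rJ : r <= J by apply: le_trans (ltW (covers_lt (Fcov _ q0S))) (mJ _ q0S).
  have HpJ : forall q, q \in S -> p <= J `|` q.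
    move=> q qS.
    have H1 : m q `|` q <= p by rewrite leUx Fmp (ltW (covers_lt (F0 _ qS))).
    case/orP: (covers_mid (F0 _ qS) (leUr _ _) H1) => /eqP E.
      have : m q <= q by rewrite -{2}E leUl.
      by rewrite (negbTE (Fnle _ qS)).
    by rewrite -E leUx (le_trans (mJ _ qS) (leUl _ _)) leUr.
  have : p <= J `|` r.
    have := join_bigmeet J S (fun x => x); rewrite /= -/r => ->.
    by apply/meetsP => q qS; apply: HpJ.
  by rewrite (join_idPl rJ).
have Hleft : forall j : {q : L | join_irr q}, lcm_fam p S (false, j) = nat_of_bool (~~ (val j <= r)).
  move=> j; rewrite lcm_false; congr nat_of_bool.
  rewrite Frj; apply/idP/idP.
    case/orP=> [jp|/exists_inP [q qS jq]].
      by apply/negP => /forall_inP H; move: jp; rewrite (le_trans (H _ q0S) (ltW (covers_lt (F0 _ q0S)))).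
    by apply/negP => /forall_inP H; move: jq; rewrite H.
  move=> H; apply/orP; right; apply/exists_inP.
  case: (boolP [exists q in S, ~~ (val j <= q)]) => [/exists_inP //|/exists_inPn H'].
  exfalso; move/negP: H; apply; apply/forall_inP => q qS.
  by move: (H' q qS); rewrite negbK.
split=> //.
  apply/ffunP => [[[] j]]; last first.
    by rewrite Hleft lcm_false_low // => b; rewrite !inE => /andP [_ /andP [-> _]].
  rewrite !lcm_true; congr nat_of_bool.
  have Tp : forall s, s \in T -> s <= p by move=> s; rewrite !inE => /andP [_ /andP [_ ->]].
  transitivity (val j <= p).
    apply/idP/idP => [/orP [//|/exists_inP [q qS jq]]|->//].
    exact: le_trans jq (ltW (covers_lt (F0 _ qS))).
  apply/idP/idP => [jp|/orP [jr|/exists_inP [s sT js]]].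
  - have : val j <= \join_(s in T) s by rewrite HJ.
    case/(join_prime_big (valP j)) => s sT js.
    by apply/orP; right; apply/exists_inP; exists s.
  - exact: le_trans jr Frp.
  - exact: le_trans js (Tp _ sT).
move=> r' T' nr HT'; apply/negP => /eqP E; move/eqP: nr; apply.
apply: ji_eq => j Jj.
move/ffunP: E => /(_ (false, exist _ j Jj)); rewrite Hleft lcm_false_low /=.
  by move/nat_of_bool_inj/negb_inj.
by move=> b /(subsetP HT'); rewrite inE => /covers_lt/ltW.
Qed.
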